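(* Let $R\subseteq\{e,c,w\}$ and let $\{s_1,\ldots,s_n\}\cup\{x\Rightarrow\delta\}$ ($n\ge1$) be a finite set of $\mathcal L^0$-sequents (sequents not containing $!$). Then $\{s_1,\ldots,s_n\}\vdash_{\mathbf{InFNL}_R}x\Rightarrow\delta\iff\ \vdash_{\mathbf{NACCLL}^-_R}x\circ(\tau(s_1)\circ(\tau(s_2)\circ\cdots(\tau(s_{n-1})\circ\tau(s_n))\cdots))\Rightarrow\delta$, and $\{s_1,\ldots,s_n\}\vdash_{\mathbf{CyInFNL}_R}x\Rightarrow\delta\iff\ \vdash_{\mathbf{NACCLL}_R}x\circ(\tau(s_1)\circ(\tau(s_2)\circ\cdots(\tau(s_{n-1})\circ\tau(s_n))\cdots))\Rightarrow\delta$.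
   Context: Formulas: terms over a countably infinite set of variables in $\{\wedge,\vee,\cdot,\backslash,/,!,1,0\}$; $\mathcal L^0$-formulas are those without $!$. Structures: elements of the free unital groupoid $(Fm^\circ,\circ,\varepsilon)$ generated by formulas ($\circ$ non-associative, $\varepsilon$ empty structure and unit). $k$ ranges over structures in the free unital groupoid generated by formulas $!a$ (including $\varepsilon$). A context $u$ is a structure with exactly one hole; $u(x)$ fills it. A sequent is $x\Rightarrow\delta$, $\delta$ a formula or the empty stoup $\epsilon$. For a structure $x$, $\rho(x)$ is the formula obtained by replacing each $\circ$ by $\cdot$ ($\rho(\varepsilon)=1$); $\theta(\epsilon)=0$, $\theta(a)=a$; for $s=(x\Rightarrow\delta)$, $\tau(s)=!(\rho(x)\backslash\theta(\delta))$. $\mathbf{NACILL}^0$: initial sequents $a\Rightarrow a$, $\varepsilon\Rightarrow 1$, $0\Rightarrow\epsilon$; rules (premises / conclusion): (cut) $x\Rightarrow a$, $u(a)\Rightarrow\delta$ / $u(x)\Rightarrow\delta$; $(1\Rightarrow)$ $u(\varepsilon)\Rightarrow\delta$ / $u(1)\Rightarrow\delta$; $(\Rightarrow 0)$ $x\Rightarrow\epsilon$ / $x\Rightarrow 0$; $(\backslash\Rightarrow)$ $x\Rightarrow a$, $u(b)\Rightarrow\delta$ / $u(x\circ(a\backslash b))\Rightarrow\delta$; $(\Rightarrow\backslash)$ $a\circ x\Rightarrow b$ / $x\Rightarrow a\backslash b$; $(/\Rightarrow)$ $x\Rightarrow a$, $u(b)\Rightarrow\delta$ / $u((b/a)\circ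 x)\Rightarrow\delta$; $(\Rightarrow/)$ $x\circ a\Rightarrow b$ / $x\Rightarrow b/a$; $(\cdot\Rightarrow)$ $u(a\circ b)\Rightarrow\delta$ / $u(a\cdot b)\Rightarrow\delta$; $(\Rightarrow\cdot)$ $x\Rightarrow a$, $y\Rightarrow b$ / $x\circ y\Rightarrow a\cdot b$; $(\wedge\Rightarrow)$ $u(a_i)\Rightarrow\delta$ / $u(a_1\wedge a_2)\Rightarrow\delta$; $(\Rightarrow\wedge)$ $x\Rightarrow a$, $x\Rightarrow b$ / $x\Rightarrow a\wedge b$; $(\vee\Rightarrow)$ $u(a)\Rightarrow\delta$, $u(b)\Rightarrow\delta$ / $u(a\vee b)\Rightarrow\delta$; $(\Rightarrow\vee)$ $x\Rightarrow a_i$ / $x\Rightarrow a_1\vee a_2$; $(!\Rightarrow)$ $u(a)\Rightarrow\delta$ / $u(!a)\Rightarrow\delta$; $(\Rightarrow!)$ $k\Rightarrow a$ / $k\Rightarrow !a$; $(kw)$ $u(\varepsilon)\Rightarrow\delta$ / $u(k)\Rightarrow\delta$; $(kc)$ $u(k\circ k)\Rightarrow\delta$ / $u(k)\Rightarrow\delta$; two-directional: $(ke)$ $u(k\circ y)\Rightarrow\delta\leftrightarrow u(y\circ k)\Rightarrow\delta$; $(ka1)$ $u((k\circ y)\circ z)\Rightarrow\delta\leftrightarrow u(k\circ(y\circ z))\Rightarrow\delta$; $(ka2)$ $u((x\circ y)\circ k)\Rightarrow\delta\leftrightarrow u(x\circ(y\circ k))\Rightarrow\delta$. $\mathbf{NACCLL}^-$: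 $\mathbf{NACILL}^0$ plus initial sequents ${\sim}(-a)\Rightarrow a$, $-({\sim}a)\Rightarrow a$, $({\sim}a)/b\Rightarrow a\backslash(-b)$, $a\backslash(-b)\Rightarrow({\sim}a)/b$, where ${\sim}a:=a\backslash 0$, $-a:=0/a$. $\mathbf{NACCLL}$: additionally ${\sim}a\Rightarrow -a$, $-a\Rightarrow{\sim}a$. $\mathbf{InFNL}$ ($\mathbf{CyInFNL}$): the $!$-free fragment of $\mathbf{NACCLL}^-$ ($\mathbf{NACCLL}$), using only $!$-free formulas and omitting $(!\Rightarrow),(\Rightarrow!),(kw),(kc),(ke),(ka1),(ka2)$. Structural rules: $(e)$ $u(x\circ y)\Rightarrow\delta$ / $u(y\circ x)\Rightarrow\delta$; $(c)$ $u(x\circ x)\Rightarrow\delta$ / $u(x)\Rightarrow\delta$; $(i)$ $u(\varepsilon)\Rightarrow\delta$ / $u(x)\Rightarrow\delta$; $(o)$ $x\Rightarrow\epsilon$ / $x\Rightarrow a$; $(w)$ means both $(i)$ and $(o)$. Subscript $R$ adds the rules in $R$. $\mathcal S\vdash s$: there is a derivation of $s$ whose leaves are initial sequents or members of $\mathcal S$; $\vdash s$ means $\emptyset\vdash s$. *)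

(* Defs.v *)
From Stdlib Require Import List.
Import ListNotations.

(* Formulas.  LDiv a b is  a\b ;  RDiv b a is  b/a. *)
Inductive form : Type :=
| Var  : nat -> form
| And  : form -> form -> form
| Or   : form -> form -> form
| Mul  : form -> form -> form
| LDiv : form -> form -> form
| RDiv : form -> form -> form
| Bang : form -> form
| One  : form
| Zero : form.

Fixpoint bangfree (a : form) : Prop :=
  match a with
  | Var _ | One | Zero => True
  | And a b | Or a b | Mul a b | LDiv a b | RDiv a b => bangfree a /\ bangfree b
  | Bang _ => False
  end.

(* ~a := a\0 ,  -a := 0/a *)
Definition neg_l (a : form) : form := LDiv a Zero.
Definition neg_r (a : form) : form := RDiv Zero a.

(* Raw structures (terms of the groupoid); they are identified modulo the
   unit laws  eps o x = x = x o eps  via [norm]. *)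
Inductive Str : Type :=
| SF    : form -> Str
| SComp : Str -> Str -> Str
| SEmpty : Str.

Definition comp (x y : Str) : Str :=
  match x, y with
  | SEmpty, _ => y
  | _, SEmpty => x
  | _, _ => SComp x y
  end.

Fixpoint norm (x : Str) : Str :=
  match x with
  | SF a => SF a
  | SComp x y => comp (norm x) (norm y)
  | SEmpty => SEmpty
  end.

Fixpoint bangfree_str (x : Str) : Prop :=
  match x with
  | SF a => bangfree a
  | SComp x y => bangfree_str x /\ bangfree_str y
  | SEmpty => True
  end.

Fixpoint isK (x : Str) : Prop :=
  match x with
  | SF (Bang _) => True
  | SF _ => False
  | SComp x y => isK x /\ isK y
  | SEmpty => True
  end.

Inductive Ctx : Type :=
| Hole : Ctx
| CL : Ctx -> Str -> Ctx
| CR : Str -> Ctx -> Ctx.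

Fixpoint fill (u : Ctx) (z : Str) : Str :=
  match u with
  | Hole => z
  | CL u y => SComp (fill u z) y
  | CR x u => SComp x (fill u z)
  end.

(* stoup: None is the empty stoup epsilon *)
Definition stoup := option form.
Definition sequent : Type := (Str * stoup)%type.

Definition bangfree_stoup (d : stoup) : Prop :=
  match d with None => True | Some a => bangfree a end.

Definition bangfree_seq (s : sequent) : Prop :=
  bangfree_str (fst s) /\ bangfree_stoup (snd s).

Fixpoint rho (x : Str) : form :=
  match x with
  | SF a => a
  | SComp x y => Mul (rho x) (rho y)
  | SEmpty => One
  end.

Definition theta (d : stoup) : form :=
  match d with None => Zero | Some a => a end.

Definition tau (s : sequent) : form := Bang (LDiv (rho (fst s)) (theta (snd s))).

Fixpoint tauchain (l : list sequent) : Str :=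
  match l with
  | [] => SEmpty
  | [s] => SF (tau s)
  | s :: l' => SComp (SF (tau s)) (tauchain l')
  end.

(* Structural rules: e, c, w (w = i and o) *)
Inductive srule : Type := Re | Rc | Rw.

(* Derivability.  [bg] = true: the calculus with ! (NACCLL^-/NACCLL);
   [bg] = false: its !-free fragment (InFNL/CyInFNL): the ! rules are
   omitted and every sequent in the derivation must be !-free.
   [cy] = true adds the cyclic initial sequents ~a => -a, -a => ~a.
   [R] : the structural rules added.  [S] : the non-logical leaves. *)
Definition ok (bg : bool) (x : Str) (d : stoup) : Prop :=
  bg = true \/ (bangfree_str x /\ bangfree_stoup d).

Inductive Deriv (bg cy : bool) (R : srule -> Prop) (S : sequent -> Prop)
  : Str -> stoup -> Prop :=
| d_unit : forall x y d, Deriv bg cy R S x d -> norm x = norm y -> ok bg y d ->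
    Deriv bg cy R S y d
| d_hyp : forall x d, S (x, d) -> ok bg x d -> Deriv bg cy R S x d
| d_id : forall a, ok bg (SF a) (Some a) -> Deriv bg cy R S (SF a) (Some a)
| d_one : Deriv bg cy R S SEmpty (Some One)
| d_zero : Deriv bg cy R S (SF Zero) None
| d_ax1 : forall a, ok bg (SF (neg_l (neg_r a))) (Some a) ->
    Deriv bg cy R S (SF (neg_l (neg_r a))) (Some a)
| d_ax2 : forall a, ok bg (SF (neg_r (neg_l a))) (Some a) ->
    Deriv bg cy R S (SF (neg_r (neg_l a))) (Some a)
| d_ax3 : forall a b, ok bg (SF (RDiv (neg_l a) b)) (Some (LDiv a (neg_r b))) ->
    Deriv bg cy R S (SF (RDiv (neg_l a) b)) (Some (LDiv a (neg_r b)))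
| d_ax4 : forall a b, ok bg (SF (LDiv a (neg_r b))) (Some (RDiv (neg_l a) b)) ->
    Deriv bg cy R S (SF (LDiv a (neg_r b))) (Some (RDiv (neg_l a) b))
| d_cyc1 : forall a, cy = true -> ok bg (SF (neg_l a)) (Some (neg_r a)) ->
    Deriv bg cy R S (SF (neg_l a)) (Some (neg_r a))
| d_cyc2 : forall a, cy = true -> ok bg (SF (neg_r a)) (Some (neg_l a)) ->
    Deriv bg cy R S (SF (neg_r a)) (Some (neg_l a))
| d_cut : forall x a u d,
    Deriv bg cy R S x (Some a) -> Deriv bg cy R S (fill u (SF a)) d ->
    ok bg (fill u x) d -> Deriv bg cy R S (fill u x) d
| d_oneL : forall u d, Deriv bg cy R S (fill u SEmpty) d ->
    ok bg (fill u (SF One)) d -> Deriv bg cy R S (fill u (SF One)) d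
| d_zeroR : forall x, Deriv bg cy R S x None -> Deriv bg cy R S x (Some Zero)
| d_ldivL : forall x a b u d,
    Deriv bg cy R S x (Some a) -> Deriv bg cy R S (fill u (SF b)) d ->
    ok bg (fill u (SComp x (SF (LDiv a b)))) d ->
    Deriv bg cy R S (fill u (SComp x (SF (LDiv a b)))) d
| d_ldivR : forall x a b, Deriv bg cy R S (SComp (SF a) x) (Some b) ->
    ok bg x (Some (LDiv a b)) -> Deriv bg cy R S x (Some (LDiv a b))
| d_rdivL : forall x a b u d,
    Deriv bg cy R S x (Some a) -> Deriv bg cy R S (fill u (SF b)) d ->
    ok bg (fill u (SComp (SF (RDiv b a)) x)) d ->
    Deriv bg cy R S (fill u (SComp (SF (RDiv b a)) x)) d
| d_rdivR : forall x a b, Deriv bg cy R S (SComp x (SF a)) (Some b) ->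
    ok bg x (Some (RDiv b a)) -> Deriv bg cy R S x (Some (RDiv b a))
| d_mulL : forall u a b d, Deriv bg cy R S (fill u (SComp (SF a) (SF b))) d ->
    ok bg (fill u (SF (Mul a b))) d -> Deriv bg cy R S (fill u (SF (Mul a b))) d
| d_mulR : forall x y a b, Deriv bg cy R S x (Some a) -> Deriv bg cy R S y (Some b) ->
    Deriv bg cy R S (SComp x y) (Some (Mul a b))
| d_andL1 : forall u a b d, Deriv bg cy R S (fill u (SF a)) d ->
    ok bg (fill u (SF (And a b))) d -> Deriv bg cy R S (fill u (SF (And a b))) d
| d_andL2 : forall u a b d, Deriv bg cy R S (fill u (SF b)) d ->
    ok bg (fill u (SF (And a b))) d -> Deriv bg cy R S (fill u (SF (And a b))) d
| d_andR : forall x a b, Deriv bg cy R S x (Some a) -> Deriv bg cy R S x (Some b) ->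
    Deriv bg cy R S x (Some (And a b))
| d_orL : forall u a b d, Deriv bg cy R S (fill u (SF a)) d ->
    Deriv bg cy R S (fill u (SF b)) d -> Deriv bg cy R S (fill u (SF (Or a b))) d
| d_orR1 : forall x a b, Deriv bg cy R S x (Some a) ->
    ok bg x (Some (Or a b)) -> Deriv bg cy R S x (Some (Or a b))
| d_orR2 : forall x a b, Deriv bg cy R S x (Some b) ->
    ok bg x (Some (Or a b)) -> Deriv bg cy R S x (Some (Or a b))
| d_bangL : forall u a d, bg = true -> Deriv bg cy R S (fill u (SF a)) d ->
    Deriv bg cy R S (fill u (SF (Bang a))) d
| d_bangR : forall k a, bg = true -> isK k -> Deriv bg cy R S k (Some a) ->
    Deriv bg cy R S k (Some (Bang a))
| d_kw : forall u k d, bg = true -> isK k -> Deriv bg cy R S (fill u SEmpty) d ->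
    Deriv bg cy R S (fill u k) d
| d_kc : forall u k d, bg = true -> isK k -> Deriv bg cy R S (fill u (SComp k k)) d ->
    Deriv bg cy R S (fill u k) d
| d_ke1 : forall u k y d, bg = true -> isK k ->
    Deriv bg cy R S (fill u (SComp k y)) d -> Deriv bg cy R S (fill u (SComp y k)) d
| d_ke2 : forall u k y d, bg = true -> isK k ->
    Deriv bg cy R S (fill u (SComp y k)) d -> Deriv bg cy R S (fill u (SComp k y)) d
| d_ka1a : forall u k y z d, bg = true -> isK k ->
    Deriv bg cy R S (fill u (SComp (SComp k y) z)) d ->
    Deriv bg cy R S (fill u (SComp k (SComp y z))) d
| d_ka1b : forall u k y z d, bg = true -> isK k ->
    Deriv bg cy R S (fill u (SComp k (SComp y z))) d ->
    Deriv bg cy R S (fill u (SComp (SComp k y) z)) d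
| d_ka2a : forall u k x y d, bg = true -> isK k ->
    Deriv bg cy R S (fill u (SComp (SComp x y) k)) d ->
    Deriv bg cy R S (fill u (SComp x (SComp y k))) d
| d_ka2b : forall u k x y d, bg = true -> isK k ->
    Deriv bg cy R S (fill u (SComp x (SComp y k))) d ->
    Deriv bg cy R S (fill u (SComp (SComp x y) k)) d
| d_e : forall u x y d, R Re -> Deriv bg cy R S (fill u (SComp x y)) d ->
    Deriv bg cy R S (fill u (SComp y x)) d
| d_c : forall u x d, R Rc -> Deriv bg cy R S (fill u (SComp x x)) d ->
    Deriv bg cy R S (fill u x) d
| d_i : forall u x d, R Rw -> Deriv bg cy R S (fill u SEmpty) d ->
    ok bg (fill u x) d -> Deriv bg cy R S (fill u x) d
| d_o : forall x a, R Rw -> Deriv bg cy R S x None -> ok bg x (Some a) ->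
    Deriv bg cy R S x (Some a).

Definition InFNL_der (R : srule -> Prop) (S : sequent -> Prop) (x : Str) (d : stoup) :=
  Deriv false false R S x d.
Definition CyInFNL_der (R : srule -> Prop) (S : sequent -> Prop) (x : Str) (d : stoup) :=
  Deriv false true R S x d.
Definition NACCLLm_prov (R : srule -> Prop) (x : Str) (d : stoup) :=
  Deriv true false R (fun _ => False) x d.
Definition NACCLL_prov (R : srule -> Prop) (x : Str) (d : stoup) :=
  Deriv true true R (fun _ => False) x d.

(* Main.v *)
Require Import Defs.
From Stdlib Require Import List ClassicalEpsilon Classical.
Import ListNotations.

Fixpoint cc (v u : Ctx) : Ctx :=
  match v with Hole => u | CL v y => CL (cc v u) y | CR x v => CR x (cc v u) end.
Lemma fill_cc v u z : fill (cc v u) z = fill v (fill u z).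
Proof. induction v; simpl; congruence. Qed.

Lemma okT x d : ok true x d.
Proof. left; reflexivity. Qed.
Global Hint Resolve okT : core.

Section Fwd.
Variables (cy : bool) (R : srule -> Prop) (S : sequent -> Prop).
Notation D := (Deriv true cy R S).

Lemma ke_iff u k y d : isK k -> D (fill u (SComp k y)) d <-> D (fill u (SComp y k)) d.
Proof. intros Hk; split; intro H; [apply d_ke1|apply d_ke2]; auto. Qed.
Lemma ka1_iff u k y z d : isK k -> D (fill u (SComp (SComp k y) z)) d <-> D (fill u (SComp k (SComp y z))) d.
Proof. intros Hk; split; intro H; [apply d_ka1a|apply d_ka1b]; auto. Qed.
Lemma ka2_iff u k x y d : isK k -> D (fill u (SComp (SComp x y) k)) d <-> D (fill u (SComp x (SComp y k))) d.
Proof. intros Hk; split; intro H; [apply d_ka2a|apply d_ka2b]; auto. Qed.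

Lemma move u : forall k v z d, isK k ->
  D (fill v (fill u (SComp z k))) d <-> D (fill v (SComp (fill u z) k)) d.
Proof.
  induction u as [|u IH y|x u IH]; intros k v z d Hk; simpl.
  - tauto.
  - pose proof (IH k (cc v (CL Hole y)) z d Hk) as H. rewrite !fill_cc in H. simpl in H.
    rewrite H.
    pose proof (ke_iff (cc v (CL Hole y)) k (fill u z) d Hk) as H1. rewrite !fill_cc in H1; simpl in H1.
    rewrite <- H1.
    rewrite (ka1_iff v k (fill u z) y d Hk).
    apply ke_iff; auto.
  - pose proof (IH k (cc v (CR x Hole)) z d Hk) as H. rewrite !fill_cc in H. simpl in H.
    rewrite H. symmetry. apply ka2_iff; auto.
Qed.

Lemma move0 u k z d : isK k -> D (fill u (SComp z k)) d <-> D (SComp (fill u z) k) d.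
Proof. intros Hk. exact (move u k Hole z d Hk). Qed.

Lemma contr A K d : isK K -> D (SComp (SComp A K) K) d -> D (SComp A K) d.
Proof.
  intros Hk H. apply (d_ka2a _ _ _ _ Hole) in H; auto. simpl in H.
  apply (d_kc _ _ _ _ (CR A Hole)); auto.
Qed.

Lemma comp_e x : comp x SEmpty = x.
Proof. destruct x; reflexivity. Qed.

Lemma weakK y K d : isK K -> D y d -> D (SComp y K) d.
Proof.
  intros Hk H. apply (d_kw _ _ _ _ (CR y Hole)); auto. simpl.
  apply d_unit with y; auto. simpl. rewrite comp_e. reflexivity.
Qed.
End Fwd.

Section Fwd2.
Variables (cy : bool) (R : srule -> Prop).
Notation D := (Deriv true cy R (fun _ => False)).

Lemma pull u w z K d : isK K -> D (SComp (fill u (fill w (SComp z K))) K) d ->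
  D (SComp (fill u (fill w z)) K) d.
Proof.
  intros Hk H.
  pose proof (proj1 (move cy R (fun _ => False) w K (cc (CL Hole K) u) z d Hk)) as H1.
  rewrite !fill_cc in H1. simpl in H1. specialize (H1 H).
  pose proof (proj1 (move cy R (fun _ => False) u K (CL Hole K) (fill w z) d Hk)) as H2.
  simpl in H2. apply contr; auto.
Qed.

Lemma rho_der y : D y (Some (rho y)).
Proof.
  induction y; simpl.
  - apply d_id; auto.
  - apply d_mulR; auto.
  - apply d_one.
Qed.

Lemma hyp_one y dd : D (SComp y (SF (tau (y,dd)))) dd.
Proof.
  unfold tau; simpl.
  apply (d_bangL _ _ _ _ (CR y Hole)); auto. simpl.
  apply (d_ldivL _ _ _ _ y (rho y) (theta dd) Hole); auto.
  - apply rho_der.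
  - destruct dd; simpl. apply d_id; auto. apply d_zero.
Qed.

Lemma isK_tc l : isK (tauchain l).
Proof.
  induction l as [|a l IH]; simpl; auto.
  destruct l; simpl; try split; auto.
Qed.

Lemma inK s l y d : In s l -> D (SComp y (SF (tau s))) d -> D (SComp y (tauchain l)) d.
Proof.
  induction l as [|a l IH]; intros Hin H; [destruct Hin|].
  destruct l as [|b l'].
  - destruct Hin as [<-|[]]. exact H.
  - change (tauchain (a :: b :: l')) with (SComp (SF (tau a)) (tauchain (b::l'))).
    destruct Hin as [->|Hin].
    + apply (d_kw _ _ _ _ (CR y (CR (SF (tau s)) Hole))); auto. apply isK_tc.
      simpl. apply d_unit with (SComp y (SF (tau s))); auto.
    + specialize (IH Hin H).
      apply (d_kw _ _ _ _ (CR y (CL Hole (tauchain (b::l'))))); auto. simpl; exact I.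
      simpl. apply d_unit with (SComp y (tauchain (b :: l'))); auto.
Qed.

Lemma fwd l y d : Deriv false cy R (fun s => In s l) y d -> D (SComp y (tauchain l)) d.
Proof.
  intro H. pose proof (isK_tc l) as HK. set (K := tauchain l) in *.
  induction H; try discriminate.
  - apply d_unit with (SComp x K); auto. simpl. rewrite H0. reflexivity.
  - apply inK with (x, d); auto. apply hyp_one.
  - apply weakK; auto. apply d_id; auto.
  - apply weakK; auto. apply d_one.
  - apply weakK; auto. apply d_zero.
  - apply weakK; auto. apply d_ax1; auto.
  - apply weakK; auto. apply d_ax2; auto.
  - apply weakK; auto. apply d_ax3; auto.
  - apply weakK; auto. apply d_ax4; auto.
  - apply weakK; auto. apply d_cyc1; auto.
  - apply weakK; auto. apply d_cyc2; auto.
  - apply (pull u Hole x K d); auto. simpl.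
    exact (d_cut _ _ _ _ (SComp x K) a (CL u K) d IHDeriv1 IHDeriv2 (okT _ _)).
  - exact (d_oneL _ _ _ _ (CL u K) d IHDeriv (okT _ _)).
  - apply d_zeroR; auto.
  - apply (pull u (CL Hole (SF (LDiv a b))) x K d); auto. simpl.
    exact (d_ldivL _ _ _ _ (SComp x K) a b (CL u K) d IHDeriv1 IHDeriv2 (okT _ _)).
  - apply d_ldivR; auto. exact (d_ka2a _ _ _ _ Hole K (SF a) x _ eq_refl HK IHDeriv).
  - apply (pull u (CR (SF (RDiv b a)) Hole) x K d); auto. simpl.
    exact (d_rdivL _ _ _ _ (SComp x K) a b (CL u K) d IHDeriv1 IHDeriv2 (okT _ _)).
  - apply d_rdivR; auto.
    apply (proj2 (move0 cy R (fun _ => False) (CL Hole (SF a)) K x _ HK)). exact IHDeriv.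
  - exact (d_mulL _ _ _ _ (CL u K) a b d IHDeriv (okT _ _)).
  - apply (pull (CR x Hole) Hole y K); auto. simpl.
    apply (proj1 (move0 cy R (fun _ => False) (CL Hole (SComp y K)) K x _ HK)). simpl.
    apply d_mulR; auto.
  - exact (d_andL1 _ _ _ _ (CL u K) a b d IHDeriv (okT _ _)).
  - exact (d_andL2 _ _ _ _ (CL u K) a b d IHDeriv (okT _ _)).
  - apply d_andR; auto.
  - exact (d_orL _ _ _ _ (CL u K) a b d IHDeriv1 IHDeriv2).
  - apply d_orR1; auto.
  - apply d_orR2; auto.
  - exact (d_e _ _ _ _ (CL u K) x y d H IHDeriv).
  - exact (d_c _ _ _ _ (CL u K) x d H IHDeriv).
  - exact (d_i _ _ _ _ (CL u K) x d H IHDeriv (okT _ _)).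
  - apply d_o; auto.
Qed.
End Fwd2.

Section Model.
Variable M : Type.
Variable le : M -> M -> Prop.
Variables (mmul mld mrd mand mor : M -> M -> M) (mone mzero mbot : M) (mbang : M -> M)
  (val : nat -> M).
Variables (cy : bool) (R : srule -> Prop).
Hypothesis le_refl : forall a, le a a.
Hypothesis le_trans : forall a b c, le a b -> le b c -> le a c.
Hypothesis res_l : forall a b c, le (mmul a b) c <-> le b (mld a c).
Hypothesis res_r : forall a b c, le (mmul a b) c <-> le a (mrd c b).
Hypothesis and_l1 : forall a b, le (mand a b) a.
Hypothesis and_l2 : forall a b, le (mand a b) b.
Hypothesis and_glb : forall a b c, le c a -> le c b -> le c (mand a b).
Hypothesis or_r1 : forall a b, le a (mor a b).
Hypothesis or_r2 : forall a b, le b (mor a b).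
Hypothesis or_lub : forall a b c, le a c -> le b c -> le (mor a b) c.
Hypothesis one_l1 : forall a, le (mmul mone a) a.
Hypothesis one_l2 : forall a, le a (mmul mone a).
Hypothesis one_r1 : forall a, le (mmul a mone) a.
Hypothesis one_r2 : forall a, le a (mmul a mone).
Hypothesis m_ax1 : forall a, le (mld (mrd mzero a) mzero) a.
Hypothesis m_ax2 : forall a, le (mrd mzero (mld a mzero)) a.
Hypothesis m_ax3 : forall a b, le (mrd (mld a mzero) b) (mld a (mrd mzero b)).
Hypothesis m_ax4 : forall a b, le (mld a (mrd mzero b)) (mrd (mld a mzero) b).
Hypothesis m_cyc1 : cy = true -> forall a, le (mld a mzero) (mrd mzero a).
Hypothesis m_cyc2 : cy = true -> forall a, le (mrd mzero a) (mld a mzero).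
Hypothesis bot_le : forall a, le mbot a.
Hypothesis bot_l : forall a, le (mmul mbot a) mbot.
Hypothesis bot_r : forall a, le (mmul a mbot) mbot.
Hypothesis bang_cases : forall a, (mbang a = mone /\ le mone a) \/ mbang a = mbot.
Hypothesis bang_one : forall a, le mone a -> mbang a = mone.
Hypothesis s_e : R Re -> forall a b, le (mmul a b) (mmul b a).
Hypothesis s_c : R Rc -> forall a, le a (mmul a a).
Hypothesis s_i : R Rw -> forall a, le a mone.
Hypothesis s_o : R Rw -> forall a, le mzero a.

Fixpoint Ip (a : form) : M :=
  match a with
  | Var n => val n
  | And a b => mand (Ip a) (Ip b)
  | Or a b => mor (Ip a) (Ip b)
  | Mul a b => mmul (Ip a) (Ip b)
  | LDiv a b => mld (Ip a) (Ip b)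
  | RDiv a b => mrd (Ip a) (Ip b)
  | Bang a => mbang (Ip a)
  | One => mone
  | Zero => mzero
  end.
Definition SI (x : Str) := Ip (rho x).
Definition DI (d : stoup) := Ip (theta d).

Fixpoint CI (u : Ctx) (m : M) : M :=
  match u with
  | Hole => m
  | CL u y => mmul (CI u m) (SI y)
  | CR x u => mmul (SI x) (CI u m)
  end.

Lemma SI_fill u z : SI (fill u z) = CI u (SI z).
Proof. induction u; simpl; unfold SI in *; simpl; try rewrite IHu; reflexivity. Qed.

Lemma mul_monor a b b' : le b b' -> le (mmul a b) (mmul a b').
Proof.
  intro H. apply res_l. apply le_trans with b'; auto. apply res_l. apply le_refl.
Qed.
Lemma mul_monol a a' b : le a a' -> le (mmul a b) (mmul a' b).
Proof.
  intro H. apply res_r. apply le_trans with a'; auto. apply res_r. apply le_refl.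
Qed.
Lemma mul_mono a a' b b' : le a a' -> le b b' -> le (mmul a b) (mmul a' b').
Proof. intros. apply le_trans with (mmul a' b). apply mul_monol; auto. apply mul_monor; auto. Qed.

Lemma CI_mono u m m' : le m m' -> le (CI u m) (CI u m').
Proof. induction u; simpl; intros; auto; [apply mul_monol|apply mul_monor]; auto. Qed.

Lemma CI_or u : forall a b c, le (CI u a) c -> le (CI u b) c -> le (CI u (mor a b)) c.
Proof.
  induction u; simpl; intros a b c H1 H2.
  - apply or_lub; auto.
  - apply res_r. apply IHu; apply res_r; auto.
  - apply res_l. apply IHu; apply res_l; auto.
Qed.

Definition eqv a b := le a b /\ le b a.

Lemma SI_comp x y : eqv (SI (comp x y)) (mmul (SI x) (SI y)).
Proof.
  destruct x; destruct y; simpl; unfold SI; simpl; split; auto.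
Qed.

Lemma SI_norm x : eqv (SI (norm x)) (SI x).
Proof.
  induction x; simpl; try (split; apply le_refl).
  destruct (SI_comp (norm x1) (norm x2)) as [A B].
  destruct IHx1, IHx2.
  split.
  - eapply le_trans. apply A. unfold SI at 3; simpl. apply mul_mono; auto.
  - eapply le_trans. 2: apply B. unfold SI at 1; simpl. apply mul_mono; auto.
Qed.

Definition Kp m := eqv m mone \/ eqv m mbot.

Lemma isK_Kp k : isK k -> Kp (SI k).
Proof.
  induction k; simpl; intros Hk.
  - destruct f; try contradiction. unfold SI; simpl.
    destruct (bang_cases (Ip f)) as [[-> _]| ->]; [left|right]; split; apply le_refl.
  - destruct Hk as [H1 H2]. unfold SI; simpl. fold (SI k1) (SI k2).
    destruct (IHk1 H1) as [[A B]|[A B]].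
    + destruct (IHk2 H2) as [[C D]|[C D]].
      * left; split. eapply le_trans. apply mul_mono; eauto. auto.
        eapply le_trans. apply one_l2. apply mul_mono; eauto.
      * right; split; auto. eapply le_trans. apply mul_monor; eauto. auto.
    + right; split; auto. eapply le_trans. apply mul_monol; eauto. auto.
  - left; split; apply le_refl.
Qed.

Lemma Kp_le_bot m a : le m mbot -> le m a.
Proof. intros; eapply le_trans; eauto. Qed.

Lemma Kp_comm m y : Kp m -> le (mmul m y) (mmul y m).
Proof.
  intros [[A B]|[A B]].
  - eapply le_trans. apply mul_monol; eauto. eapply le_trans. apply one_l1.
    eapply le_trans. apply one_r2. apply mul_monor; auto.
  - eapply le_trans. apply mul_monol; eauto. eapply le_trans. apply bot_l. auto.
Qed.
Lemma Kp_comm' m y : Kp m -> le (mmul y m) (mmul m y).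
Proof.
  intros [[A B]|[A B]].
  - eapply le_trans. apply mul_monor; eauto. eapply le_trans. apply one_r1.
    eapply le_trans. apply one_l2. apply mul_monol; auto.
  - eapply le_trans. apply mul_monor; eauto. eapply le_trans. apply bot_r. auto.
Qed.
Lemma Kp_a1 m y z : Kp m -> le (mmul (mmul m y) z) (mmul m (mmul y z)).
Proof.
  intros [[A B]|[A B]].
  - eapply le_trans. apply mul_monol. apply mul_monol; eauto.
    eapply le_trans. apply mul_monol. apply one_l1.
    eapply le_trans. apply one_l2. apply mul_monol; auto.
  - eapply le_trans. apply mul_monol. apply mul_monol; eauto.
    eapply le_trans. apply mul_monol. apply bot_l. eapply le_trans. apply bot_l. auto.
Qed.
Lemma Kp_a1' m y z : Kp m -> le (mmul m (mmul y z)) (mmul (mmul m y) z).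
Proof.
  intros [[A B]|[A B]].
  - eapply le_trans. apply mul_monol; eauto. eapply le_trans. apply one_l1.
    apply mul_monol. eapply le_trans. apply one_l2. apply mul_monol; auto.
  - eapply le_trans. apply mul_monol; eauto. eapply le_trans. apply bot_l. auto.
Qed.
Lemma Kp_a2 m x y : Kp m -> le (mmul (mmul x y) m) (mmul x (mmul y m)).
Proof.
  intros [[A B]|[A B]].
  - eapply le_trans. apply mul_monor; eauto. eapply le_trans. apply one_r1.
    apply mul_monor. eapply le_trans. apply one_r2. apply mul_monor; auto.
  - eapply le_trans. apply mul_monor; eauto. eapply le_trans. apply bot_r. auto.
Qed.
Lemma Kp_a2' m x y : Kp m -> le (mmul x (mmul y m)) (mmul (mmul x y) m).
Proof.
  intros [[A B]|[A B]].
  - eapply le_trans. apply mul_monor. apply mul_monor; eauto.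
    eapply le_trans. apply mul_monor. apply one_r1.
    eapply le_trans. apply one_r2. apply mul_monor; auto.
  - eapply le_trans. apply mul_monor. apply mul_monor; eauto.
    eapply le_trans. apply mul_monor. apply bot_r. eapply le_trans. apply bot_r. auto.
Qed.

Lemma sound x d : Deriv true cy R (fun _ => False) x d -> le (SI x) (DI d).
Proof.
  induction 1; unfold DI in *; simpl in *; try rewrite !SI_fill in *; try rewrite !SI_fill;
    unfold SI in *; simpl in *; fold SI in *; auto; try contradiction.
  - pose proof (SI_norm x). pose proof (SI_norm y). rewrite H0 in *.
    unfold SI in *. destruct H2, H3. eauto.
  - eapply le_trans. 2: apply IHDeriv2. apply CI_mono; auto.
  - eapply le_trans. 2: apply IHDeriv2. apply CI_mono.
    eapply le_trans. apply mul_monol; eauto. apply res_l. apply le_refl.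
  - apply res_l; auto.
  - eapply le_trans. 2: apply IHDeriv2. apply CI_mono.
    eapply le_trans. apply mul_monor; eauto. apply res_r. apply le_refl.
  - apply res_r; auto.
  - apply mul_mono; auto.
  - eapply le_trans. 2: apply IHDeriv. apply CI_mono; auto.
  - eapply le_trans. 2: apply IHDeriv. apply CI_mono; auto.
  - apply CI_or; auto.
  - eapply le_trans. apply IHDeriv. auto.
  - eapply le_trans. apply IHDeriv. auto.
  - eapply le_trans. 2: apply IHDeriv. apply CI_mono.
    destruct (bang_cases (Ip a)) as [[-> ?]| ->]; auto.
  - pose proof (isK_Kp k H0) as HK. unfold SI in HK.
    destruct HK as [[A B]|[A B]].
    + rewrite bang_one; eauto.
    + eauto.
  - pose proof (isK_Kp k H0) as HK. unfold SI in HK.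
    eapply le_trans. 2: apply IHDeriv. apply CI_mono.
    destruct HK as [[A B]|[A B]]; eauto.
  - pose proof (isK_Kp k H0) as HK. unfold SI in HK.
    eapply le_trans. 2: apply IHDeriv. apply CI_mono.
    destruct HK as [[A B]|[A B]].
    + eapply le_trans. eauto. eapply le_trans. apply one_l2. apply mul_mono; eauto.
    + eauto.
  - eapply le_trans. 2: apply IHDeriv. apply CI_mono. apply Kp_comm'. apply isK_Kp; auto.
  - eapply le_trans. 2: apply IHDeriv. apply CI_mono. apply Kp_comm. apply isK_Kp; auto.
  - eapply le_trans. 2: apply IHDeriv. apply CI_mono. apply Kp_a1'. apply isK_Kp; auto.
  - eapply le_trans. 2: apply IHDeriv. apply CI_mono. apply Kp_a1. apply isK_Kp; auto.
  - eapply le_trans. 2: apply IHDeriv. apply CI_mono. apply Kp_a2'. apply isK_Kp; auto.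
  - eapply le_trans. 2: apply IHDeriv. apply CI_mono. apply Kp_a2. apply isK_Kp; auto.
  - eapply le_trans. 2: apply IHDeriv. apply CI_mono. apply s_e; auto.
  - eapply le_trans. 2: apply IHDeriv. apply CI_mono. apply s_c; auto.
  - eapply le_trans. 2: apply IHDeriv. apply CI_mono. apply s_i; auto.
  - eapply le_trans. apply IHDeriv. apply s_o; auto.
Qed.

Lemma one_le_tc l : (forall s, In s l -> le mone (Ip (LDiv (rho (fst s)) (theta (snd s))))) ->
  le mone (SI (tauchain l)).
Proof.
  induction l as [|s l IH]; intros H.
  - apply le_refl.
  - assert (Hs : SI (SF (tau s)) = mone).
    { unfold SI, tau; simpl. apply bang_one. apply (H s). left; auto. }
    destruct l as [|b l'].
    + simpl. rewrite <- Hs. apply le_refl.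
    + change (SI (tauchain (s :: b :: l'))) with (mmul (SI (SF (tau s))) (SI (tauchain (b :: l')))).
      rewrite Hs. eapply le_trans. apply one_l2. apply mul_monor. apply IH.
      intros s' Hs'. apply H. right; auto.
Qed.

Lemma sound_main l x d : (forall s, In s l -> le mone (Ip (LDiv (rho (fst s)) (theta (snd s))))) ->
  Deriv true cy R (fun _ => False) (SComp x (tauchain l)) d -> le (Ip (rho x)) (Ip (theta d)).
Proof.
  intros Hl H. apply sound in H. unfold SI, DI in H; simpl in H. fold (SI (tauchain l)) in H.
  eapply le_trans. apply one_r2. eapply le_trans. 2: apply H. apply mul_monor.
  apply one_le_tc; auto.
Qed.
End Model.

Fixpoint bf_ctx (u : Ctx) : Prop :=
  match u with Hole => True | CL u y => bf_ctx u /\ bangfree_str y | CR x u => bangfree_str x /\ bf_ctx u end.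

Lemma bf_fill u z : bangfree_str (fill u z) <-> bf_ctx u /\ bangfree_str z.
Proof. induction u; simpl; try rewrite IHu; tauto. Qed.

Lemma bf_rho y : bangfree_str y -> bangfree (rho y).
Proof. induction y; simpl; tauto. Qed.
Lemma bf_theta d : bangfree_stoup d -> bangfree (theta d).
Proof. destruct d; simpl; auto. Qed.

Ltac okt := right; split; simpl; try rewrite bf_fill; simpl; intuition auto.

Section F.
Variables (cy : bool) (R : srule -> Prop) (S : sequent -> Prop).
Notation Dv := (Deriv false cy R S).
Notation L a b := (Dv (SF a) (Some b)).

Lemma F_refl a : bangfree a -> L a a.
Proof. intros; apply d_id; okt. Qed.

Lemma F_trans a b c : bangfree a -> bangfree c -> L a b -> L b c -> L a c.
Proof. intros. apply (d_cut _ _ _ _ (SF a) b Hole); auto; okt. Qed.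

Lemma F_resl1 a b c : bangfree a -> bangfree b -> bangfree c ->
  L (Mul a b) c -> L b (LDiv a c).
Proof.
  intros. apply d_ldivR; [|okt].
  apply (d_cut _ _ _ _ (SComp (SF a) (SF b)) (Mul a b) Hole); auto; [|okt].
  apply d_mulR; apply F_refl; auto.
Qed.
Lemma F_resl2 a b c : bangfree a -> bangfree b -> bangfree c ->
  L b (LDiv a c) -> L (Mul a b) c.
Proof.
  intros. apply (d_mulL _ _ _ _ Hole); [|okt]. simpl.
  apply (d_cut _ _ _ _ (SF b) (LDiv a c) (CR (SF a) Hole)); auto; [|okt]. simpl.
  apply (d_ldivL _ _ _ _ (SF a) a c Hole); [apply F_refl| apply F_refl|okt]; auto.
Qed.
Lemma F_resr1 a b c : bangfree a -> bangfree b -> bangfree c ->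
  L (Mul a b) c -> L a (RDiv c b).
Proof.
  intros. apply d_rdivR; [|okt].
  apply (d_cut _ _ _ _ (SComp (SF a) (SF b)) (Mul a b) Hole); auto; [|okt].
  apply d_mulR; apply F_refl; auto.
Qed.
Lemma F_resr2 a b c : bangfree a -> bangfree b -> bangfree c ->
  L a (RDiv c b) -> L (Mul a b) c.
Proof.
  intros. apply (d_mulL _ _ _ _ Hole); [|okt]. simpl.
  apply (d_cut _ _ _ _ (SF a) (RDiv c b) (CL Hole (SF b))); auto; [|okt]. simpl.
  apply (d_rdivL _ _ _ _ (SF b) b c Hole); [apply F_refl| apply F_refl|okt]; auto.
Qed.
Lemma F_and1 a b : bangfree a -> bangfree b -> L (And a b) a.
Proof. intros. apply (d_andL1 _ _ _ _ Hole); [apply F_refl|okt]; auto. Qed.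
Lemma F_and2 a b : bangfree a -> bangfree b -> L (And a b) b.
Proof. intros. apply (d_andL2 _ _ _ _ Hole); [apply F_refl|okt]; auto. Qed.
Lemma F_andg a b c : L c a -> L c b -> L c (And a b).
Proof. intros. apply d_andR; auto. Qed.
Lemma F_or1 a b : bangfree a -> bangfree b -> L a (Or a b).
Proof. intros. apply d_orR1; [apply F_refl|okt]; auto. Qed.
Lemma F_or2 a b : bangfree a -> bangfree b -> L b (Or a b).
Proof. intros. apply d_orR2; [apply F_refl|okt]; auto. Qed.
Lemma F_orl a b c : L a c -> L b c -> L (Or a b) c.
Proof. intros. apply (d_orL _ _ _ _ Hole); auto. Qed.

Lemma F_onel1 a : bangfree a -> L (Mul One a) a.
Proof.
  intros. apply (d_mulL _ _ _ _ Hole); [|okt]. simpl.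
  apply (d_oneL _ _ _ _ (CL Hole (SF a))); [|okt]. simpl.
  apply d_unit with (SF a); [apply F_refl; auto|reflexivity|okt].
Qed.
Lemma F_onel2 a : bangfree a -> L a (Mul One a).
Proof.
  intros. apply d_unit with (SComp SEmpty (SF a)); [|reflexivity|okt].
  apply d_mulR; [apply d_one|apply F_refl; auto].
Qed.
Lemma F_oner1 a : bangfree a -> L (Mul a One) a.
Proof.
  intros. apply (d_mulL _ _ _ _ Hole); [|okt]. simpl.
  apply (d_oneL _ _ _ _ (CR (SF a) Hole)); [|okt]. simpl.
  apply d_unit with (SF a); [apply F_refl; auto|reflexivity|okt].
Qed.
Lemma F_oner2 a : bangfree a -> L a (Mul a One).
Proof.
  intros. apply d_unit with (SComp (SF a) SEmpty); [|reflexivity|okt].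
  apply d_mulR; [apply F_refl; auto|apply d_one].
Qed.

Lemma F_ax1 a : bangfree a -> L (neg_l (neg_r a)) a.
Proof. intros; apply d_ax1; okt. Qed.
Lemma F_ax2 a : bangfree a -> L (neg_r (neg_l a)) a.
Proof. intros; apply d_ax2; okt. Qed.
Lemma F_ax3 a b : bangfree a -> bangfree b -> L (RDiv (neg_l a) b) (LDiv a (neg_r b)).
Proof. intros; apply d_ax3; okt. Qed.
Lemma F_ax4 a b : bangfree a -> bangfree b -> L (LDiv a (neg_r b)) (RDiv (neg_l a) b).
Proof. intros; apply d_ax4; okt. Qed.
Lemma F_cyc1 a : cy = true -> bangfree a -> L (neg_l a) (neg_r a).
Proof. intros; apply d_cyc1; auto; okt. Qed.
Lemma F_cyc2 a : cy = true -> bangfree a -> L (neg_r a) (neg_l a).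
Proof. intros; apply d_cyc2; auto; okt. Qed.

Lemma F_e a b : R Re -> bangfree a -> bangfree b -> L (Mul a b) (Mul b a).
Proof.
  intros. apply (d_mulL _ _ _ _ Hole); [|okt]. simpl.
  apply (d_e _ _ _ _ Hole (SF b) (SF a)); auto. simpl.
  apply d_mulR; apply F_refl; auto.
Qed.
Lemma F_c a : R Rc -> bangfree a -> L a (Mul a a).
Proof.
  intros. apply (d_c _ _ _ _ Hole (SF a)); auto. simpl.
  apply d_mulR; apply F_refl; auto.
Qed.
Lemma F_i a : R Rw -> bangfree a -> L a One.
Proof. intros. apply (d_i _ _ _ _ Hole (SF a)); auto; [apply d_one|okt]. Qed.
Lemma F_o a : R Rw -> bangfree a -> L Zero a.
Proof. intros. apply d_o; auto; [apply d_zero|okt]. Qed.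
Lemma F_zl a : R Rw -> bangfree a -> L (Mul Zero a) Zero.
Proof.
  intros. apply (d_mulL _ _ _ _ Hole); [|okt]. simpl. apply d_zeroR.
  apply (d_i _ _ _ _ (CR (SF Zero) Hole) (SF a)); auto; [|okt]. simpl.
  apply d_unit with (SF Zero); [apply d_zero|reflexivity|okt].
Qed.
Lemma F_zr a : R Rw -> bangfree a -> L (Mul a Zero) Zero.
Proof.
  intros. apply (d_mulL _ _ _ _ Hole); [|okt]. simpl. apply d_zeroR.
  apply (d_i _ _ _ _ (CL Hole (SF Zero)) (SF a)); auto; [|okt]. simpl.
  apply d_unit with (SF Zero); [apply d_zero|reflexivity|okt].
Qed.

Lemma F_unfold y : forall u d, bangfree_str y -> bf_ctx u -> bangfree_stoup d ->
  Dv (fill u y) d -> Dv (fill u (SF (rho y))) d.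
Proof.
  induction y as [a|y1 IH1 y2 IH2|]; intros u d B1 B2 B3 H; simpl in *; auto.
  - destruct B1 as [B1a B1b].
    apply (d_mulL _ _ _ _ u); [|okt; apply bf_rho; auto].
    pose proof (IH2 (cc u (CR (SF (rho y1)) Hole)) d B1b) as H2.
    rewrite !fill_cc in H2. simpl in H2. apply H2; auto.
    { clear -B2 B1a. induction u; simpl in *; intuition auto using bf_rho. }
    pose proof (IH1 (cc u (CL Hole y2)) d B1a) as G1.
    rewrite !fill_cc in G1. simpl in G1. apply G1; auto.
    { clear -B2 B1b. induction u; simpl in *; intuition auto. }
  - apply (d_oneL _ _ _ _ u); auto. okt.
Qed.

Lemma F_rho y : bangfree_str y -> Dv y (Some (rho y)).
Proof.
  induction y; simpl; intros.
  - apply F_refl; auto.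
  - apply d_mulR; tauto.
  - apply d_one.
Qed.

Lemma F_hyp y dd : S (y, dd) -> bangfree_str y -> bangfree_stoup dd ->
  L One (LDiv (rho y) (theta dd)).
Proof.
  intros Hs B1 B2. pose proof (bf_rho y B1). pose proof (bf_theta dd B2).
  apply d_ldivR; [|okt].
  apply (d_oneL _ _ _ _ (CR (SF (rho y)) Hole)); [|okt]. simpl.
  apply d_unit with (SF (rho y)); [|reflexivity|okt].
  apply (F_unfold y Hole); simpl; auto.
  destruct dd; simpl.
  - apply d_hyp; auto; okt.
  - apply d_zeroR. apply d_hyp; auto; okt.
Qed.

Lemma F_back x d : bangfree_str x -> bangfree_stoup d -> L (rho x) (theta d) -> Dv x d.
Proof.
  intros B1 B2 H. pose proof (bf_rho x B1). pose proof (bf_theta d B2).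
  assert (G : Dv x (Some (theta d))).
  { apply (d_cut _ _ _ _ x (rho x) Hole); auto. apply F_rho; auto. okt. }
  destruct d; simpl in *; auto.
  apply (d_cut _ _ _ _ x Zero Hole); auto. apply d_zero. okt.
Qed.
End F.

Section Models.
Variables (cy : bool) (R : srule -> Prop) (l : list sequent).
Notation S := (fun s => In s l).
Notation L a b := (Deriv false cy R S (SF a) (Some b)).

Definition M1 := {a : form | bangfree a}.
Definition le1 (p q : M1) := L (proj1_sig p) (proj1_sig q).
Definition mul1 (p q : M1) : M1 := exist _ (Mul (proj1_sig p) (proj1_sig q)) (conj (proj2_sig p) (proj2_sig q)).
Definition ld1 (p q : M1) : M1 := exist _ (LDiv (proj1_sig p) (proj1_sig q)) (conj (proj2_sig p) (proj2_sig q)).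
Definition rd1 (p q : M1) : M1 := exist _ (RDiv (proj1_sig p) (proj1_sig q)) (conj (proj2_sig p) (proj2_sig q)).
Definition and1 (p q : M1) : M1 := exist _ (And (proj1_sig p) (proj1_sig q)) (conj (proj2_sig p) (proj2_sig q)).
Definition or1 (p q : M1) : M1 := exist _ (Or (proj1_sig p) (proj1_sig q)) (conj (proj2_sig p) (proj2_sig q)).
Definition one1 : M1 := exist _ One I.
Definition zero1 : M1 := exist _ Zero I.
Definition val1 (n : nat) : M1 := exist _ (Var n) I.
Definition bang1 (m : M1) : M1 := if excluded_middle_informative (le1 one1 m) then one1 else zero1.

Ltac d1 := repeat match goal with p : M1 |- _ => destruct p end;
  unfold le1, mul1, ld1, rd1, and1, or1, one1, zero1 in *; simpl in *.

Lemma m1_refl a : le1 a a. Proof. d1. apply F_refl; auto. Qed.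
Lemma m1_trans a b c : le1 a b -> le1 b c -> le1 a c.
Proof. d1. intros; eapply F_trans; eauto. Qed.
Lemma m1_resl a b c : le1 (mul1 a b) c <-> le1 b (ld1 a c).
Proof. d1. split; [apply F_resl1|apply F_resl2]; auto. Qed.
Lemma m1_resr a b c : le1 (mul1 a b) c <-> le1 a (rd1 c b).
Proof. d1. split; [apply F_resr1|apply F_resr2]; auto. Qed.
Lemma m1_and1 a b : le1 (and1 a b) a. Proof. d1. apply F_and1; auto. Qed.
Lemma m1_and2 a b : le1 (and1 a b) b. Proof. d1. apply F_and2; auto. Qed.
Lemma m1_andg a b c : le1 c a -> le1 c b -> le1 c (and1 a b). Proof. d1. apply F_andg. Qed.
Lemma m1_or1 a b : le1 a (or1 a b). Proof. d1. apply F_or1; auto. Qed.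
Lemma m1_or2 a b : le1 b (or1 a b). Proof. d1. apply F_or2; auto. Qed.
Lemma m1_orl a b c : le1 a c -> le1 b c -> le1 (or1 a b) c. Proof. d1. apply F_orl. Qed.
Lemma m1_onel1 a : le1 (mul1 one1 a) a. Proof. d1. apply F_onel1; auto. Qed.
Lemma m1_onel2 a : le1 a (mul1 one1 a). Proof. d1. apply F_onel2; auto. Qed.
Lemma m1_oner1 a : le1 (mul1 a one1) a. Proof. d1. apply F_oner1; auto. Qed.
Lemma m1_oner2 a : le1 a (mul1 a one1). Proof. d1. apply F_oner2; auto. Qed.
Lemma m1_ax1 a : le1 (ld1 (rd1 zero1 a) zero1) a. Proof. d1. apply F_ax1; auto. Qed.
Lemma m1_ax2 a : le1 (rd1 zero1 (ld1 a zero1)) a. Proof. d1. apply F_ax2; auto. Qed.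
Lemma m1_ax3 a b : le1 (rd1 (ld1 a zero1) b) (ld1 a (rd1 zero1 b)). Proof. d1. apply F_ax3; auto. Qed.
Lemma m1_ax4 a b : le1 (ld1 a (rd1 zero1 b)) (rd1 (ld1 a zero1) b). Proof. d1. apply F_ax4; auto. Qed.
Lemma m1_cyc1 : cy = true -> forall a, le1 (ld1 a zero1) (rd1 zero1 a). Proof. intros ? a. d1. apply F_cyc1; auto. Qed.
Lemma m1_cyc2 : cy = true -> forall a, le1 (rd1 zero1 a) (ld1 a zero1). Proof. intros ? a. d1. apply F_cyc2; auto. Qed.
Lemma m1_e : R Re -> forall a b, le1 (mul1 a b) (mul1 b a). Proof. intros ? a b. d1. apply F_e; auto. Qed.
Lemma m1_c : R Rc -> forall a, le1 a (mul1 a a). Proof. intros ? a. d1. apply F_c; auto. Qed.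
Lemma m1_i : R Rw -> forall a, le1 a one1. Proof. intros ? a. d1. apply F_i; auto. Qed.
Lemma m1_o : R Rw -> forall a, le1 zero1 a. Proof. intros ? a. d1. apply F_o; auto. Qed.
Lemma m1_zl : R Rw -> forall a, le1 (mul1 zero1 a) zero1. Proof. intros ? a. d1. apply F_zl; auto. Qed.
Lemma m1_zr : R Rw -> forall a, le1 (mul1 a zero1) zero1. Proof. intros ? a. d1. apply F_zr; auto. Qed.
Lemma m1_bc a : (bang1 a = one1 /\ le1 one1 a) \/ bang1 a = zero1.
Proof. unfold bang1. destruct (excluded_middle_informative (le1 one1 a)); auto. Qed.
Lemma m1_bo a : le1 one1 a -> bang1 a = one1.
Proof. unfold bang1. destruct (excluded_middle_informative (le1 one1 a)); tauto. Qed.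
End Models.

Inductive M2 := Bot | Top | El (p : M1).

Section M2s.
Variables (cy : bool) (R : srule -> Prop) (l : list sequent).
Notation S := (fun s => In s l).
Notation le1 := (le1 cy R l).

Definition le2 (a b : M2) : Prop :=
  match a, b with Bot, _ => True | _, Top => True | El p, El q => le1 p q | _, _ => False end.
Definition mul2 (a b : M2) : M2 :=
  match a, b with Bot, _ => Bot | _, Bot => Bot | Top, _ => Top | _, Top => Top
  | El p, El q => El (mul1 p q) end.
Definition ld2 (a c : M2) : M2 :=
  match a, c with Bot, _ => Top | _, Top => Top | Top, _ => Bot | El _, Bot => Bot
  | El p, El q => El (ld1 p q) end.
Definition rd2 (c a : M2) : M2 :=
  match a, c with Bot, _ => Top | _, Top => Top | Top, _ => Bot | El _, Bot => Bot
  | El p, El q => El (rd1 q p) end.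
Definition and2 (a b : M2) : M2 :=
  match a, b with Bot, _ => Bot | _, Bot => Bot | Top, y => y | x, Top => x
  | El p, El q => El (and1 p q) end.
Definition or2 (a b : M2) : M2 :=
  match a, b with Top, _ => Top | _, Top => Top | Bot, y => y | x, Bot => x
  | El p, El q => El (or1 p q) end.
Definition one2 := El one1.
Definition zero2 := El zero1.
Definition val2 n := El (val1 n).
Definition bang2 (m : M2) : M2 := if excluded_middle_informative (le2 one2 m) then one2 else Bot.

Ltac d2 := repeat match goal with p : M2 |- _ => destruct p end;
  unfold le2, mul2, ld2, rd2, and2, or2, one2, zero2 in *; simpl in *.

Lemma m2_refl a : le2 a a. Proof. d2; auto using m1_refl. Qed.
Lemma m2_trans a b c : le2 a b -> le2 b c -> le2 a c.
Proof. d2; try tauto; eauto using m1_trans. Qed.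
Lemma m2_resl a b c : le2 (mul2 a b) c <-> le2 b (ld2 a c).
Proof. d2; try tauto; apply m1_resl. Qed.
Lemma m2_resr a b c : le2 (mul2 a b) c <-> le2 a (rd2 c b).
Proof. d2; try tauto; apply m1_resr. Qed.
Lemma m2_and1 a b : le2 (and2 a b) a. Proof. d2; auto using m1_refl, m1_and1. Qed.
Lemma m2_and2 a b : le2 (and2 a b) b. Proof. d2; auto using m1_refl, m1_and2. Qed.
Lemma m2_andg a b c : le2 c a -> le2 c b -> le2 (c) (and2 a b). Proof. d2; auto using m1_andg. Qed.
Lemma m2_or1 a b : le2 a (or2 a b). Proof. d2; auto using m1_refl, m1_or1. Qed.
Lemma m2_or2 a b : le2 b (or2 a b). Proof. d2; auto using m1_refl, m1_or2. Qed.
Lemma m2_orl a b c : le2 a c -> le2 b c -> le2 (or2 a b) c. Proof. d2; auto using m1_orl. Qed.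
Lemma m2_onel1 a : le2 (mul2 one2 a) a. Proof. d2; auto using m1_onel1. Qed.
Lemma m2_onel2 a : le2 a (mul2 one2 a). Proof. d2; auto using m1_onel2. Qed.
Lemma m2_oner1 a : le2 (mul2 a one2) a. Proof. d2; auto using m1_oner1. Qed.
Lemma m2_oner2 a : le2 a (mul2 a one2). Proof. d2; auto using m1_oner2. Qed.
Lemma m2_ax1 a : le2 (ld2 (rd2 zero2 a) zero2) a. Proof. d2; auto using m1_ax1. Qed.
Lemma m2_ax2 a : le2 (rd2 zero2 (ld2 a zero2)) a. Proof. d2; auto using m1_ax2. Qed.
Lemma m2_ax3 a b : le2 (rd2 (ld2 a zero2) b) (ld2 a (rd2 zero2 b)). Proof. d2; auto using m1_ax3. Qed.
Lemma m2_ax4 a b : le2 (ld2 a (rd2 zero2 b)) (rd2 (ld2 a zero2) b). Proof. d2; auto using m1_ax4. Qed.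
Lemma m2_cyc1 : cy = true -> forall a, le2 (ld2 a zero2) (rd2 zero2 a). Proof. intros ? a. d2; auto using m1_cyc1. Qed.
Lemma m2_cyc2 : cy = true -> forall a, le2 (rd2 zero2 a) (ld2 a zero2). Proof. intros ? a. d2; auto using m1_cyc2. Qed.
Lemma m2_e : R Re -> forall a b, le2 (mul2 a b) (mul2 b a). Proof. intros ? a b. d2; auto using m1_e. Qed.
Lemma m2_c : R Rc -> forall a, le2 a (mul2 a a). Proof. intros ? a. d2; auto using m1_c. Qed.
Lemma m2_botl a : le2 Bot a. Proof. exact I. Qed.
Lemma m2_bl a : le2 (mul2 Bot a) Bot. Proof. exact I. Qed.
Lemma m2_br a : le2 (mul2 a Bot) Bot. Proof. d2; auto. Qed.
Lemma m2_bc a : (bang2 a = one2 /\ le2 one2 a) \/ bang2 a = Bot.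
Proof. unfold bang2. destruct (excluded_middle_informative (le2 one2 a)); auto. Qed.
Lemma m2_bo a : le2 one2 a -> bang2 a = one2.
Proof. unfold bang2. destruct (excluded_middle_informative (le2 one2 a)); tauto. Qed.
End M2s.

Lemma Ip_M1 bng a : bangfree a ->
  proj1_sig (Ip M1 mul1 ld1 rd1 and1 or1 one1 zero1 bng val1 a) = a.
Proof.
  induction a; simpl; intros; try tauto;
  try (destruct H; rewrite IHa1, IHa2; auto).
Qed.

Lemma Ip_M2 bng a : bangfree a ->
  exists p, Ip M2 mul2 ld2 rd2 and2 or2 one2 zero2 bng val2 a = El p /\ proj1_sig p = a.
Proof.
  induction a; simpl; intros; try tauto;
  try (destruct H as [H1 H2]; destruct (IHa1 H1) as [p [-> <-]]; destruct (IHa2 H2) as [q [-> <-]];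
       simpl; eexists; split; reflexivity).
  - eexists; split; reflexivity.
  - exists one1; auto.
  - exists zero1; auto.
Qed.

Lemma back cy R l x d :
  (forall s, In s l -> bangfree_seq s) -> bangfree_seq (x, d) ->
  Deriv true cy R (fun _ => False) (SComp x (tauchain l)) d ->
  Deriv false cy R (fun s => In s l) x d.
Proof.
  intros Hl [Bx Bd] H. simpl in Bx, Bd.
  pose proof (bf_rho x Bx) as Bx'. pose proof (bf_theta d Bd) as Bd'.
  apply F_back; auto.
  destruct (classic (R Rw)) as [Hw|Hw].
  - pose proof (sound_main M1 (le1 cy R l) mul1 ld1 rd1 and1 or1 one1 zero1 zero1 (bang1 cy R l) val1 cy R
      (m1_refl cy R l) (m1_trans cy R l) (m1_resl cy R l) (m1_resr cy R l)
      (m1_and1 cy R l) (m1_and2 cy R l) (m1_andg cy R l) (m1_or1 cy R l) (m1_or2 cy R l) (m1_orl cy R l)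
      (m1_onel1 cy R l) (m1_onel2 cy R l) (m1_oner1 cy R l) (m1_oner2 cy R l)
      (m1_ax1 cy R l) (m1_ax2 cy R l) (m1_ax3 cy R l) (m1_ax4 cy R l) (m1_cyc1 cy R l) (m1_cyc2 cy R l)
      (m1_o cy R l Hw) (m1_zl cy R l Hw) (m1_zr cy R l Hw) (m1_bc cy R l) (m1_bo cy R l)
      (m1_e cy R l) (m1_c cy R l) (m1_i cy R l) (m1_o cy R l) l x d) as G.
    unfold le1 in G. rewrite !Ip_M1 in G; auto. apply G; auto.
    intros [y dd] Hs. destruct (Hl _ Hs) as [B1 B2]; simpl in *.
    unfold le1. simpl. rewrite !Ip_M1 by auto using bf_rho, bf_theta. apply F_hyp; auto.
  - pose proof (sound_main M2 (le2 cy R l) mul2 ld2 rd2 and2 or2 one2 zero2 Bot (bang2 cy R l) val2 cy R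
      (m2_refl cy R l) (m2_trans cy R l) (m2_resl cy R l) (m2_resr cy R l)
      (m2_and1 cy R l) (m2_and2 cy R l) (m2_andg cy R l) (m2_or1 cy R l) (m2_or2 cy R l) (m2_orl cy R l)
      (m2_onel1 cy R l) (m2_onel2 cy R l) (m2_oner1 cy R l) (m2_oner2 cy R l)
      (m2_ax1 cy R l) (m2_ax2 cy R l) (m2_ax3 cy R l) (m2_ax4 cy R l) (m2_cyc1 cy R l) (m2_cyc2 cy R l)
      (m2_botl cy R l) (m2_bl cy R l) (m2_br cy R l) (m2_bc cy R l) (m2_bo cy R l)
      (m2_e cy R l) (m2_c cy R l) (fun h => False_ind _ (Hw h)) (fun h => False_ind _ (Hw h)) l x d) as G.
    destruct (Ip_M2 (bang2 cy R l) (rho x) Bx') as [p [E1 E2]].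
    destruct (Ip_M2 (bang2 cy R l) (theta d) Bd') as [q [E3 E4]].
    rewrite E1, E3 in G. simpl in G. unfold le1 in G. rewrite E2, E4 in G. apply G; auto.
    intros [y dd] Hs. destruct (Hl _ Hs) as [B1 B2]; simpl in *.
    destruct (Ip_M2 (bang2 cy R l) (rho y) (bf_rho _ B1)) as [r [E5 E6]].
    destruct (Ip_M2 (bang2 cy R l) (theta dd) (bf_theta _ B2)) as [r' [E7 E8]].
    cbn [fst snd]. simpl. rewrite E5, E7. simpl. unfold le1. simpl. rewrite E6, E8.
    apply F_hyp; auto.
Qed.

Theorem mainTheorem19 (R : srule -> Prop) (l : list sequent) (x : Str) (d : stoup) :
  l <> nil ->
  (forall s, In s l -> bangfree_seq s) ->
  bangfree_seq (x, d) ->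
  (InFNL_der R (fun s => In s l) x d <-> NACCLLm_prov R (SComp x (tauchain l)) d) /\
  (CyInFNL_der R (fun s => In s l) x d <-> NACCLL_prov R (SComp x (tauchain l)) d).
Proof.
  intros Hn Hl Hx. unfold InFNL_der, CyInFNL_der, NACCLLm_prov, NACCLL_prov.
  split; split; intro H; try (apply fwd; exact H); apply back; auto.
Qed.
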